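(* Let $(X,\tau_\delta)_{\delta>0}$ be a Hilbert dilation system, $\mathcal E\subseteq X$ an ellipsoid, $\epsilon\in(0,1/2)$, $I\subseteq(0,\infty)$ a compact interval, and suppose $\tau_\delta\mathcal E$ is $\epsilon$-degenerate for every $\delta\in I$. Then there is a subspace $H\subseteq X$ such that for all $\delta\in I$: (a) $\tau_\delta\mathcal E\subseteq\tau_\delta H+\epsilon\mathcal B$, and (b) $\tau_\delta H\cap\frac{1}{2\epsilon}\mathcal B\subseteq\tau_\delta\mathcal E$.
   Context: Hilbert dilation system: $X$ a real Hilbert space of finite dimension $d$, $X=\bigoplus_{\nu=1}^mX_\nu$ orthogonal, $\tau_\delta|_{X_\nu}=\delta^{-\nu}\mathrm{id}$. $\mathcal B$ is the closed unit ball of $X$. A (centered) ellipsoid is a set $\{\sum_{i=1}^dc_i\sigma_iv_i:\sum c_i^2\le1\}$ with $\sigma_1\ge\dots\ge\sigma_d\ge0$ (principal axis lengths) and $\{v_i\}$ an orthonormal basis. An ellipsoid is $\epsilon$-degenerate if none of its principal axis lengths lies in $[\epsilon,\epsilon^{-1}]$. *)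

(* Defs.v *)
From HB Require Import structures.
From mathcomp Require Import all_boot all_order all_algebra.
From mathcomp Require Import classical_sets reals.
Set Implicit Arguments. Unset Strict Implicit. Unset Printing Implicit Defensive.
Import Order.TTheory GRing.Theory Num.Theory.
Local Open Scope ring_scope.
Local Open Scope classical_set_scope.

(* The Hilbert space X of dimension d is modelled as 'rV[R]_d with the
   standard inner product. *)
Definition dotp (R : realType) (d : nat) (x y : 'rV[R]_d) : R := (x *m y^T) 0 0.
Definition vnorm (R : realType) (d : nat) (x : 'rV[R]_d) : R := Num.sqrt (dotp x x).

Definition ballr (R : realType) (d : nat) (r : R) : set 'rV[R]_d :=
  [set x | vnorm x <= r].

Definition msum (R : realType) (d : nat) (A B : set 'rV[R]_d) : set 'rV[R]_d :=
  [set z | exists x y, A x /\ B y /\ z = x + y].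

Definition orthonormal_rows (R : realType) (d : nat) (V : 'M[R]_d) : Prop :=
  V *m V^T = 1%:M.

(* The dilations: an orthonormal basis (rows of U) adapted to the orthogonal
   decomposition X = X_1 (+) ... (+) X_m, the basis vector row i U lying in
   X_(w i), with 1 <= w i <= m.  tau_delta acts by delta^(-nu) on X_nu. *)
Definition dil (R : realType) (d : nat) (U : 'M[R]_d) (w : 'I_d -> nat)
  (delta : R) (x : 'rV[R]_d) : 'rV[R]_d :=
  x *m (U^T *m diag_mx (\row_i (delta ^- (w i))) *m U).

Definition ellipsoid_of (R : realType) (d : nat) (sigma : 'I_d -> R) (V : 'M[R]_d)
  : set 'rV[R]_d :=
  [set x | exists c : 'rV[R]_d, dotp c c <= 1 /\
           x = \sum_(i < d) (c 0 i * sigma i) *: row i V].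

Definition axes_ok (R : realType) (d : nat) (sigma : 'I_d -> R) : Prop :=
  (forall i : 'I_d, 0 <= sigma i) /\
  (forall i j : 'I_d, (i <= j)%N -> sigma j <= sigma i).

Definition is_ellipsoid (R : realType) (d : nat) (E : set 'rV[R]_d) : Prop :=
  exists sigma V, axes_ok sigma /\ orthonormal_rows V /\ E = ellipsoid_of sigma V.

Definition eps_degenerate (R : realType) (d : nat) (eps : R) (E : set 'rV[R]_d)
  : Prop :=
  exists sigma V, axes_ok sigma /\ orthonormal_rows V /\ E = ellipsoid_of sigma V /\
    forall i : 'I_d, ~ (eps <= sigma i /\ sigma i <= eps^-1).

(* Main.v *)
Require Import Defs.
From HB Require Import structures.
From mathcomp Require Import all_boot all_order all_algebra.
From mathcomp Require Import classical_sets reals.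
From mathcomp Require Import ring lra zify.
Import Order.TTheory GRing.Theory Num.Theory.
Local Open Scope ring_scope.
Local Open Scope classical_set_scope.
Set Implicit Arguments. Unset Strict Implicit.

Definition sqn (R : realType) (d : nat) (x : 'rV[R]_d) : R := \sum_i (x 0 i) ^+ 2.
Arguments sqn {R d} x.

Lemma dotpE (R : realType) (d : nat) (x : 'rV[R]_d) : dotp x x = sqn x.
Proof. by rewrite /dotp /sqn !mxE; apply: eq_bigr => i _; rewrite mxE expr2. Qed.

Lemma sqn_ge0 {R : realType} {d : nat} (x : 'rV[R]_d) : 0 <= sqn x.
Proof. by apply: sumr_ge0 => i _; rewrite sqr_ge0. Qed.

Lemma sqn_eq0 (R : realType) (d : nat) (x : 'rV[R]_d) : sqn x = 0 -> x = 0.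
Proof.
move=> h; apply/rowP => i; rewrite mxE.
have /eqP := h; rewrite psumr_eq0; last by move=> j _; rewrite sqr_ge0.
by move/allP => /(_ i (mem_index_enum _)) /=; rewrite sqrf_eq0 => /eqP.
Qed.

Lemma vnorm_le (R : realType) (d : nat) (x : 'rV[R]_d) (r : R) :
  0 <= r -> sqn x <= r ^+ 2 -> vnorm x <= r.
Proof.
move=> r0 h; rewrite /vnorm dotpE -[r in _ <= r]ger0_norm // -sqrtr_sqr.
by rewrite ler_sqrt // sqr_ge0.
Qed.

Lemma vnorm_sqn (R : realType) (d : nat) (x : 'rV[R]_d) (r : R) :
  vnorm x <= r -> sqn x <= r ^+ 2.
Proof.
rewrite /vnorm dotpE => h.
have h0 : 0 <= Num.sqrt (sqn x) by apply: sqrtr_ge0.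
rewrite -(sqr_sqrtr (sqn_ge0 x)).
by rewrite ler_sqr // ?nnegrE // (le_trans h0 h).
Qed.

Lemma sqn_scale (R : realType) (d : nat) (c : R) (x : 'rV[R]_d) :
  sqn (c *: x) = c ^+ 2 * sqn x.
Proof.
rewrite /sqn mulr_sumr; apply: eq_bigr => i _; rewrite mxE; ring.
Qed.

Lemma sqn_add2 (R : realType) (d : nat) (x y : 'rV[R]_d) :
  sqn (x + y) <= 2 * sqn x + 2 * sqn y.
Proof.
rewrite /sqn !mulr_sumr -big_split /=; apply: ler_sum => i _; rewrite mxE.
have := sqr_ge0 (x 0 i - y 0 i); nra.
Qed.

Lemma sqn_orth (R : realType) (d : nat) (V : 'M[R]_d) (x : 'rV[R]_d) :
  V *m V^T = 1%:M -> sqn (x *m V) = sqn x.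
Proof.
move=> hV; rewrite -!dotpE /dotp trmx_mul mulmxA -(mulmxA x) hV mulmx1 //.
Qed.

Lemma sqn_diag (R : realType) (d : nat) (x dd : 'rV[R]_d) :
  sqn (x *m diag_mx dd) = \sum_i (x 0 i) ^+ 2 * (dd 0 i) ^+ 2.
Proof.
rewrite /sqn mul_mx_diag; apply: eq_bigr => i _; rewrite mxE; ring.
Qed.

Lemma sqn_diag_bounds (R : realType) (d : nat) (x dd : 'rV[R]_d) (k : R) :
  (forall i, k <= (dd 0 i) ^+ 2 <= 1) ->
  k * sqn x <= sqn (x *m diag_mx dd) <= sqn x.
Proof.
move=> h; rewrite sqn_diag /sqn mulr_sumr; apply/andP; split; apply: ler_sum => i _;
  have /andP[h1 h2] := h i; have := sqr_ge0 (x 0 i); nra.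
Qed.

Fact Dm_key : unit. Proof. exact: tt. Qed.
Definition Dm (R : realType) (d : nat) (U : 'M[R]_d) (w : 'I_d -> nat) (delta : R) : 'M[R]_d :=
  locked_with Dm_key (U^T *m diag_mx (\row_i (delta ^- (w i))) *m U).

Lemma dilE (R : realType) (d : nat) (U : 'M[R]_d) w delta x :
  dil U w delta x = x *m Dm U w delta.
Proof. by rewrite /Dm !locked_withE. Qed.

Lemma orthC (R : realType) (d : nat) (U : 'M[R]_d) : U *m U^T = 1%:M -> U^T *m U = 1%:M.
Proof. exact: mulmx1C. Qed.

Lemma DmM (R : realType) (d : nat) (U : 'M[R]_d) w (a b : R) :
  U *m U^T = 1%:M -> Dm U w a *m Dm U w b = Dm U w (a * b).
Proof.
move=> hU; rewrite /Dm !locked_withE.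
have -> : forall A B : 'M[R]_d, U^T *m A *m U *m (U^T *m B *m U) = U^T *m (A *m B) *m U.
  by move=> A B; rewrite !mulmxA -(mulmxA _ U U^T) hU mulmx1.
congr (_ *m _ *m _).
apply/matrixP => i j; rewrite mul_mx_diag !mxE.
case: (eqVneq i j) => [->|nij]; last by rewrite !mulr0n mul0r.
by rewrite !mulr1n exprMn invfM.
Qed.

Lemma Dm1 (R : realType) (d : nat) (U : 'M[R]_d) w :
  U *m U^T = 1%:M -> Dm U w 1 = 1%:M.
Proof.
move=> hU; rewrite /Dm !locked_withE.
have -> : diag_mx (\row_i (1 ^- w i)) = 1%:M :> 'M[R]_d.
  by apply/matrixP => i j; rewrite !mxE expr1n invr1.
by rewrite mulmx1 orthC.
Qed.

Lemma DmV (R : realType) (d : nat) (U : 'M[R]_d) w (a : R) :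
  U *m U^T = 1%:M -> a != 0 -> Dm U w a *m Dm U w a^-1 = 1%:M /\ Dm U w a^-1 *m Dm U w a = 1%:M.
Proof.
move=> hU ha; rewrite !DmM // mulfV // mulVf //; split; exact: Dm1.
Qed.

Lemma sqn_Dm (R : realType) (d : nat) (U : 'M[R]_d) w (m : nat) (s : R) (x : 'rV[R]_d) :
  U *m U^T = 1%:M -> (forall i, (0 < w i <= m)%N) -> 1 <= s ->
  (s ^+ m)^-2 * sqn x <= sqn (x *m Dm U w s) <= sqn x.
Proof.
move=> hU hw hs.
have -> : x *m Dm U w s = (x *m U^T) *m diag_mx (\row_i (s ^- w i)) *m U by rewrite /Dm !locked_withE !mulmxA.
rewrite sqn_orth // -[sqn x](sqn_orth x (V:=U^T)); last by rewrite trmxK orthC.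
apply: sqn_diag_bounds => i; rewrite mxE.
have s0 : 0 < s by apply: lt_le_trans hs.
have /andP[h1 h2] := hw i.
have hp1 : 1 <= s ^+ w i by rewrite exprn_ege1.
have hp2 : s ^+ w i <= s ^+ m by rewrite ler_weXn2l.
set P := s ^+ w i in hp1 hp2 *; set Q := s ^+ m in hp2 *.
have P0 : 0 < P by apply: lt_le_trans hp1.
have Q0 : 0 < Q by apply: lt_le_trans hp2.
have i1 : P^-1 <= 1 by rewrite invf_le1.
have i2 : Q^-1 <= P^-1 by rewrite lef_pV2 ?posrE.
have i3 : 0 <= Q^-1 by rewrite invr_ge0 ltW.
apply/andP; split; first by rewrite -exprVn !expr2 ler_pM.
by rewrite expr2 mulr_ile1 // (le_trans i3 i2).
Qed.

Definition bigv (R : realType) (d : nat) (eps : R) (sigma : 'I_d -> R) : 'rV[R]_d :=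
  \row_i (if eps^-1 < sigma i then 1 else 0).
Definition Bm (R : realType) (d : nat) (eps : R) (sigma : 'I_d -> R) : 'M[R]_d :=
  diag_mx (bigv eps sigma).

Lemma pB (R : realType) (d : nat) (eps : R) (sigma : 'I_d -> R) (p : 'rV[R]_d) i :
  (p *m Bm eps sigma) 0 i = if eps^-1 < sigma i then p 0 i else 0.
Proof. by rewrite /Bm mul_mx_diag !mxE; case: ifP; rewrite ?mulr1 ?mulr0. Qed.

Lemma pT (R : realType) (d : nat) (eps : R) (sigma : 'I_d -> R) (p : 'rV[R]_d) i :
  (p *m (1%:M - Bm eps sigma)) 0 i = if eps^-1 < sigma i then 0 else p 0 i.
Proof.
rewrite mulmxBr mulmx1; have := pB eps sigma p i; set q := p *m _ => hq.
have -> : (p - q) 0 i = p 0 i - q 0 i by rewrite !mxE.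
by rewrite hq; case: ifP; rewrite ?subrr ?subr0.
Qed.

Lemma cancelV (R : realType) (d : nat) (V : 'M[R]_d) (X Y : 'rV[R]_d) :
  V *m V^T = 1%:M -> X *m V = Y *m V -> X = Y.
Proof.
move=> hV h; have := congr1 (fun Z => Z *m V^T) h.
by rewrite /= -!mulmxA hV !mulmx1.
Qed.

Lemma ell_in (R : realType) (d : nat) (sigma : 'I_d -> R) (V : 'M[R]_d) (eps : R) (xi : 'rV[R]_d) :
  0 < eps -> (forall i, ~~ (eps^-1 < sigma i) -> xi 0 i = 0) ->
  \sum_i (xi 0 i / sigma i) ^+ 2 <= 1 -> ellipsoid_of sigma V (xi *m V).
Proof.
move=> e0 hz hs; exists (\row_i (xi 0 i / sigma i)); split.
  by rewrite dotpE /sqn; under eq_bigr do rewrite mxE.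
rewrite mulmx_sum_row; apply: eq_bigr => i _; congr (_ *: _); rewrite mxE.
case: (boolP (eps^-1 < sigma i)) => hb; last by rewrite hz // mul0r mul0r.
have : 0 < sigma i by apply: lt_trans hb; rewrite invr_gt0.
by move=> s0; rewrite divfK // gt_eqF.
Qed.

Lemma ell_out (R : realType) (d : nat) (sigma : 'I_d -> R) (V : 'M[R]_d) (x : 'rV[R]_d) :
  ellipsoid_of sigma V x -> exists c : 'rV[R]_d, sqn c <= 1 /\ x = (\row_i (c 0 i * sigma i)) *m V.
Proof.
case=> c [hc ->]; exists c; split; first by rewrite -dotpE.
by rewrite mulmx_sum_row; apply: eq_bigr => i _; rewrite mxE.
Qed.

Definition ddata (R : realType) (d : nat) (U : 'M[R]_d) (w : 'I_d -> nat) (E : set 'rV[R]_d)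
  (eps delta : R) (sigma : 'I_d -> R) (V : 'M[R]_d) : Prop :=
  axes_ok sigma /\ orthonormal_rows V /\ dil U w delta @` E = ellipsoid_of sigma V /\
  forall i, ~ (eps <= sigma i /\ sigma i <= eps^-1).

Lemma coord_out (R : realType) (d : nat) (U : 'M[R]_d) w E (eps delta : R) sigma V (x : 'rV[R]_d) :
  ddata U w E eps delta sigma V -> E x ->
  exists c : 'rV[R]_d, sqn c <= 1 /\ x *m Dm U w delta = (\row_i (c 0 i * sigma i)) *m V.
Proof.
case=> _ [_ [hE _]] Ex; apply: ell_out; rewrite -hE; exists x => //; exact: dilE.
Qed.

Lemma in_E (R : realType) (d : nat) (U : 'M[R]_d) w E (eps delta : R) sigma V (xi : 'rV[R]_d) :
  U *m U^T = 1%:M -> 0 < delta -> 0 < eps ->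
  ddata U w E eps delta sigma V ->
  (forall i, ~~ (eps^-1 < sigma i) -> xi 0 i = 0) ->
  \sum_i (xi 0 i / sigma i) ^+ 2 <= 1 -> E (xi *m V *m Dm U w delta^-1).
Proof.
move=> hU d0 e0 [_ [_ [hE _]]] hz hs.
have : ellipsoid_of sigma V (xi *m V) by apply: ell_in hz hs.
rewrite -hE => -[e Ee]; rewrite dilE => <-.
by rewrite -mulmxA (DmV _ hU (lt0r_neq0 d0)).1 mulmx1.
Qed.

Lemma small_bound (R : realType) (d : nat) (sigma : 'I_d -> R) (eps : R) (c : 'rV[R]_d) :
  0 < eps -> axes_ok sigma -> (forall i, ~ (eps <= sigma i /\ sigma i <= eps^-1)) ->
  sqn c <= 1 ->
  \sum_i (if eps^-1 < sigma i then 0 else c 0 i * sigma i) ^+ 2 <= eps ^+ 2.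
Proof.
move=> e0 [s0 _] hg hc.
apply: le_trans (_ : \sum_i (c 0 i) ^+ 2 * eps ^+ 2 <= _); last by rewrite -mulr_suml ler_piMl // sqr_ge0.
apply: ler_sum => i _; case: ifP => hb; first by rewrite expr0n /= mulr_ge0 // sqr_ge0.
have hlt : sigma i < eps.
  rewrite ltNge; apply/negP => he; apply: (hg i); split => //; rewrite leNgt hb //.
rewrite exprMn ler_wpM2l ?sqr_ge0 // ler_sqr ?nnegrE ?(ltW hlt) ?s0 ?ltW //.
Qed.

Lemma big_bound (R : realType) (d : nat) (sigma : 'I_d -> R) (eps : R) (xi : 'rV[R]_d) :
  0 < eps -> (forall i, ~~ (eps^-1 < sigma i) -> xi 0 i = 0) ->
  \sum_i (xi 0 i / sigma i) ^+ 2 <= eps ^+ 2 * sqn xi.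
Proof.
move=> e0 hz; rewrite /sqn mulr_sumr; apply: ler_sum => i _.
case: (boolP (eps^-1 < sigma i)) => hb; last by rewrite hz // mul0r expr0n /= mulr_ge0 ?sqr_ge0.
have s0 : 0 < sigma i by apply: lt_trans hb; rewrite invr_gt0.
have hi : (sigma i)^-1 <= eps.
  by rewrite -[eps]invrK lef_pV2 ?posrE ?invr_gt0 // ltW.
have hi0 : 0 <= (sigma i)^-1 by rewrite invr_ge0 ltW.
rewrite exprMn mulrC ler_wpM2r ?sqr_ge0 // ler_sqr ?nnegrE ?(ltW e0) // hi0.
Qed.

Definition Sm (R : realType) (d : nat) (U : 'M[R]_d) w (eps delta : R) (sigma : 'I_d -> R) (V : 'M[R]_d) :=
  Bm eps sigma *m V *m Dm U w delta^-1.
Definition Tm (R : realType) (d : nat) (U : 'M[R]_d) w (eps delta : R) (sigma : 'I_d -> R) (V : 'M[R]_d) :=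
  (1%:M - Bm eps sigma) *m V *m Dm U w delta^-1.

Lemma rank_ST (R : realType) (d : nat) (U : 'M[R]_d) w (eps delta : R) sigma (V : 'M[R]_d) :
  U *m U^T = 1%:M -> V *m V^T = 1%:M -> 0 < delta ->
  (d <= \rank (Sm U w eps delta sigma V) + \rank (Tm U w eps delta sigma V))%N.
Proof.
move=> hU hV d0.
have hr : \rank (Sm U w eps delta sigma V + Tm U w eps delta sigma V)%R = d.
  rewrite /Sm /Tm -mulmxDl -mulmxDl addrC subrK mul1mx mxrank_unit //.
  rewrite unitmx_mul; apply/andP; split; first by case: (mulmx1_unit hV).
  have := (DmV w hU (invr_neq0 (lt0r_neq0 d0))).1; rewrite invrK.
  by case/mulmx1_unit.
apply: leq_trans (mxrank_add _ _); by rewrite hr.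
Qed.

Lemma cap_rank (R : realType) (d : nat) (A B : 'M[R]_d) :
  (forall z : 'rV[R]_d, (z <= A)%MS -> (z <= B)%MS -> z = 0) -> (\rank A + \rank B <= d)%N.
Proof.
move=> h; rewrite -mxrank_sum_cap.
have -> : (A :&: B)%MS = 0.
  apply/row_matrixP => i; rewrite row0; apply: h.
    by have := row_sub i (A :&: B)%MS; rewrite sub_capmx => /andP[].
  by have := row_sub i (A :&: B)%MS; rewrite sub_capmx => /andP[].
by rewrite mxrank0 addn0 rank_leq_col.
Qed.

Lemma Dm_cancel (R : realType) (d : nat) (U : 'M[R]_d) w (delta : R) (X : 'rV[R]_d) :
  U *m U^T = 1%:M -> 0 < delta -> X *m Dm U w delta^-1 *m Dm U w delta = X.
Proof.
move=> hU d0; have := (DmV w hU (lt0r_neq0 d0)).2.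
by rewrite -mulmxA => ->; rewrite mulmx1.
Qed.

Lemma sqn_big_zero (R : realType) (d : nat) (eps : R) sigma (c : 'rV[R]_d) :
  (forall i, eps^-1 < sigma i -> c 0 i * sigma i = 0) ->
  sqn (\row_i (c 0 i * sigma i)) =
  \sum_i (if eps^-1 < sigma i then 0 else c 0 i * sigma i) ^+ 2.
Proof.
move=> h; apply: eq_bigr => i _; rewrite mxE; case: ifP => // hb; by rewrite h.
Qed.

Lemma cap0 (R : realType) (d : nat) (U : 'M[R]_d) w E (eps delta delta' kappa : R)
  sigma V sigma' V' :
  U *m U^T = 1%:M -> 0 < delta -> 0 < delta' -> 0 < eps ->
  ddata U w E eps delta sigma V -> ddata U w E eps delta' sigma' V' ->
  (forall x, kappa * sqn (x *m Dm U w delta) <= sqn (x *m Dm U w delta')) ->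
  eps ^+ 4 < kappa ->
  forall z : 'rV[R]_d, (z <= Sm U w eps delta sigma V)%MS ->
     (z <= Tm U w eps delta' sigma' V')%MS -> z = 0.
Proof.
move=> hU d0 d0' e0 hd hd' hk hek z /submxP[p ->] /submxP[q hzq].
have hV : V *m V^T = 1%:M by case: hd => _ [].
have hV' : V' *m V'^T = 1%:M by case: hd' => _ [].
rewrite /Sm !mulmxA in hzq *.
set xi := p *m Bm eps sigma in hzq *.
have [xi0|xin0] := eqVneq (sqn xi) 0.
  by rewrite (sqn_eq0 xi0) !mul0mx.
have rho0 : 0 < sqn xi by rewrite lt_neqAle eq_sym xin0 sqn_ge0.
set lam := (eps * Num.sqrt (sqn xi))^-1.
have sq0 : 0 < Num.sqrt (sqn xi) by rewrite sqrtr_gt0.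
have lam0 : 0 < lam by rewrite invr_gt0 mulr_gt0.
have lam2 : lam ^+ 2 * sqn xi = (eps ^+ 2)^-1.
  by rewrite /lam exprVn exprMn sqr_sqrtr ?sqn_ge0 // invfM divfK // lt0r_neq0.
have Ez : E ((lam *: xi) *m V *m Dm U w delta^-1).
  apply: (in_E hU d0 e0 hd).
    by move=> i hb; rewrite mxE pB (negbTE hb) mulr0.
  apply: le_trans (@big_bound _ _ sigma eps (lam *: xi) e0 _) _.
    by move=> i hb; rewrite mxE pB (negbTE hb) mulr0.
  rewrite sqn_scale lam2 mulfV //.
  by rewrite expf_neq0 // lt0r_neq0.
have [c [hc hcz]] := coord_out hd' Ez.
have e1 : (lam *: xi) *m V *m Dm U w delta^-1 *m Dm U w delta' =
          (lam *: (q *m (1%:M - Bm eps sigma'))) *m V'.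
  by rewrite -!scalemxAl hzq Dm_cancel.
have hcq : \row_i (c 0 i * sigma' i) = lam *: (q *m (1%:M - Bm eps sigma')).
  by apply: (cancelV hV'); rewrite -hcz e1.
have hs1 : sqn ((lam *: xi) *m V *m Dm U w delta^-1 *m Dm U w delta') <= eps ^+ 2.
  rewrite hcz sqn_orth // (@sqn_big_zero _ _ eps).
    by case: hd' => ha [_ [_ hg]]; apply: small_bound.
  move=> i hb.
  move: (pT eps sigma' q i) hcq; move: (q *m _) => t ht hcq.
  have := congr1 (fun r : 'rV[R]_d => r 0 i) hcq.
  by rewrite /= !mxE ht hb mulr0.
have hs2 : sqn ((lam *: xi) *m V *m Dm U w delta^-1 *m Dm U w delta) = (eps ^+ 2)^-1.
  by rewrite Dm_cancel // sqn_orth // sqn_scale lam2.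
have := hk ((lam *: xi) *m V *m Dm U w delta^-1); rewrite hs2 => h.
have := le_trans h hs1 => h2.
have e20 : 0 < eps ^+ 2 by rewrite exprn_gt0.
have : kappa <= eps ^+ 4.
  have -> : eps ^+ 4 = eps ^+ 2 * eps ^+ 2 by rewrite -exprD.
  have h3 := ler_wpM2r (ltW e20) h2.
  by rewrite divfK ?lt0r_neq0 // in h3.
by rewrite leNgt hek.
Qed.

Lemma bern (R : realType) (t : R) (n : nat) : 0 <= t -> (1 + t) ^+ n * (1 - n%:R * t) <= 1.
Proof.
move=> t0; elim: n => [|n IH]; first by rewrite expr0 mul0r subr0 mulr1.
apply: le_trans IH; rewrite exprSr -natr1.
have hp : 0 <= (1 + t) ^+ n by rewrite exprn_ge0 // addr_ge0.
have hn : 0 <= (n%:R : R) by rewrite ler0n.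
set P := (1 + t) ^+ n in hp *; set N := (n%:R : R) in hn *.
have h3 : 0 <= P * (N * t * t + t * t) by rewrite mulr_ge0 // addr_ge0 ?mulr_ge0.
nra.
Qed.

Lemma bern2 (R : realType) (t : R) (n : nat) : 0 <= t -> n%:R * t <= 2^-1 -> (1 + t) ^+ n <= 2.
Proof.
move=> t0 h; have := bern n t0.
have hp : 0 <= (1 + t) ^+ n by rewrite exprn_ge0 // addr_ge0.
set P := (1 + t) ^+ n in hp *; set Q := n%:R * t in h *.
have k2 : (2:R)^-1 * 2 = 1 by rewrite mulVf // pnatr_eq0.
move=> h1; set k := (2:R)^-1 in h k2; clearbody k.
have : 0 <= P * (k - Q) by rewrite mulr_ge0 // subr_ge0.
nra.
Qed.

Lemma step_rank (R : realType) (d m : nat) (U : 'M[R]_d) w E (eps delta delta' : R)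
  sigma V sigma' V' :
  U *m U^T = 1%:M -> (forall i, (0 < w i <= m)%N) ->
  0 < delta -> delta <= delta' -> m%:R * (delta^-1 * delta' - 1) <= 2^-1 ->
  0 < eps -> eps < 2^-1 ->
  ddata U w E eps delta sigma V -> ddata U w E eps delta' sigma' V' ->
  (\rank (Sm U w eps delta sigma V) <= \rank (Sm U w eps delta' sigma' V'))%N.
Proof.
move=> hU hw d0 dd hm e0 e1 hd hd'.
have d0' : 0 < delta' by apply: lt_le_trans dd.
set s := delta^-1 * delta'.
have s1 : 1 <= s by rewrite /s ler_pdivlMl // mulr1.
have hsm : s ^+ m <= 2.
  have -> : s = 1 + (s - 1) by rewrite addrC subrK.
  by apply: bern2; rewrite ?subr_ge0.
have hk : forall x, (s ^+ m)^-2 * sqn (x *m Dm U w delta) <= sqn (x *m Dm U w delta').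
  move=> x; have := sqn_Dm (x *m Dm U w delta) hU hw s1 => /andP[h _].
  by rewrite -mulmxA DmM // /s mulrA mulfV ?mul1r ?lt0r_neq0 in h.
have hek : eps ^+ 4 < (s ^+ m)^-2.
  have sm0 : 0 < s ^+ m by rewrite exprn_gt0 // (lt_le_trans ltr01 s1).
  have : 4^-1 <= (s ^+ m)^-2.
    rewrite -exprVn; have hi : 2^-1 <= (s ^+ m)^-1 by rewrite lef_pV2 ?posrE.
    have -> : (4 : R)^-1 = 2^-1 ^+ 2 by rewrite exprVn; congr (_^-1); rewrite expr2 -natrM.
    by rewrite ler_pXn2r // ?nnegrE ?invr_ge0 ?ler0n // ltW.
  apply: lt_le_trans.
  have -> : (4 : R)^-1 = 2^-1 ^+ 2 by rewrite exprVn; congr (_^-1); rewrite expr2 -natrM.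
  have -> : eps ^+ 4 = (eps ^+ 2) ^+ 2 by rewrite -exprM.
  have h2 : eps ^+ 2 < 2^-1 ^+ 2 by rewrite ltr_pXn2r ?nnegrE ?invr_ge0 ?ler0n // ltW.
  apply: lt_trans (_ : 2^-1 ^+ 2 ^+ 2 < _).
    by rewrite ltr_pXn2r ?nnegrE ?exprn_ge0 ?invr_ge0 ?ler0n // ltW.
  have hh : 0 < (2:R)^-1 ^+ 2 by rewrite exprn_gt0 // invr_gt0.
  have hh1 : (2:R)^-1 ^+ 2 < 1 by rewrite expr_lt1 // ?invr_ge0 ?ler0n // invf_lt1 // ltr1n.
  rewrite [X in X < _]expr2; by rewrite gtr_pMr.
have hc := cap0 hU d0 d0' e0 hd hd' hk hek.
have h1 := cap_rank hc.
have h2 := rank_ST w eps sigma' hU (proj1 (proj2 hd')) d0'.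
rewrite /orthonormal_rows in h2.
lia.
Qed.

Lemma ratio_ok (R : realType) (m : nat) (a delta h : R) :
  0 < a -> a <= delta -> 0 <= h -> m%:R * h * 2 <= a ->
  m%:R * (delta^-1 * (delta + h) - 1) <= 2^-1.
Proof.
move=> a0 ad h0 hm.
have d0 : 0 < delta by apply: lt_le_trans ad.
have -> : delta^-1 * (delta + h) - 1 = h / delta.
  by rewrite mulrDr mulVf ?lt0r_neq0 // addrC addKr mulrC.
rewrite mulrA ler_pdivrMr //.
have hm2 : m%:R * h * 2 <= delta by apply: le_trans hm ad.
have k2 : (2:R)^-1 * 2 = 1 by rewrite mulVf // pnatr_eq0.
set k := (2:R)^-1 in k2 *; clearbody k.
set M := m%:R * h in hm2 *; nra.
Qed.

Lemma chain (R : realType) (d m : nat) (U : 'M[R]_d) w E (eps a h : R) (N : nat) sigma0 V0 :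
  U *m U^T = 1%:M -> (forall i, (0 < w i <= m)%N) ->
  0 < a -> 0 <= h -> m%:R * h * 2 <= a -> 0 < eps -> eps < 2^-1 ->
  (forall n, (n <= N)%N -> exists sigma V, ddata U w E eps (a + n%:R * h) sigma V) ->
  ddata U w E eps a sigma0 V0 ->
  forall n, (n <= N)%N -> forall sigma V, ddata U w E eps (a + n%:R * h) sigma V ->
  (\rank (Sm U w eps a sigma0 V0) <= \rank (Sm U w eps (a + n%:R * h) sigma V))%N.
Proof.
move=> hU hw a0 h0 hm e0 e1 hex hd0; elim=> [|n IH] hn sigma V hd.
  apply: (step_rank hU hw a0 _ _ e0 e1 hd0); rewrite ?mul0r ?addr0 // in hd *.
  by rewrite mulVf ?lt0r_neq0 // subrr mulr0 invr_ge0 ler0n.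
have [s' [V' hd']] := hex n (ltnW hn).
apply: leq_trans (IH (ltnW hn) _ _ hd') _.
have hn0 : 0 <= (n%:R : R) * h by rewrite mulr_ge0 ?ler0n.
have ad : a <= a + n%:R * h by rewrite lerDl.
have eh : a + n.+1%:R * h = (a + n%:R * h) + h by rewrite -natr1 mulrDl mul1r addrA.
rewrite eh in hd *.
apply: (step_rank hU hw (lt_le_trans a0 ad) _ _ e0 e1 hd'); first by rewrite lerDl.
  exact: (@ratio_ok _ m a _ h a0 ad h0 hm).
exact: hd.
Qed.

Lemma sqn_sub2 (R : realType) (d : nat) (x y : 'rV[R]_d) :
  sqn (x - y) <= 2 * sqn x + 2 * sqn y.
Proof.
have -> : sqn y = sqn (- y) by rewrite -scaleN1r sqn_scale expr2 mulN1r opprK mul1r.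
exact: sqn_add2.
Qed.

Lemma rowE (R : realType) (d : nat) (X Y : 'rV[R]_d) i : X = Y -> X 0 i = Y 0 i.
Proof. by move=> ->. Qed.

Lemma core (R : realType) (d m : nat) (U : 'M[R]_d) w E (eps a b delta : R)
  sigma V sigma' V' (xy t wx : 'rV[R]_d) :
  U *m U^T = 1%:M -> (forall i, (0 < w i <= m)%N) ->
  0 < a -> a <= delta -> delta <= b -> 0 < eps -> eps < 2^-1 ->
  ddata U w E eps a sigma V -> ddata U w E eps b sigma' V' ->
  (forall i, ~~ (eps^-1 < sigma i) -> xy 0 i = 0) ->
  (forall i, eps^-1 < sigma i -> t 0 i = 0) ->
  (forall i, ~~ (eps^-1 < sigma' i) -> wx 0 i = 0) ->
  xy *m V *m Dm U w a^-1 = wx *m V' *m Dm U w b^-1 + t *m V *m Dm U w a^-1 ->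
  sqn (xy *m V *m Dm U w a^-1 *m Dm U w delta) <= ((2 * eps)^-1) ^+ 2 ->
  E (xy *m V *m Dm U w a^-1).
Proof.
move=> hU hw a0 ad db e0 e1 hda hdb hxy ht hwx heq hyd.
have d0 : 0 < delta by apply: lt_le_trans ad.
have b0 : 0 < b by apply: lt_le_trans db.
have hV : V *m V^T = 1%:M by case: hda => _ [].
have hV' : V' *m V'^T = 1%:M by case: hdb => _ [].
apply: (in_E hU a0 e0 hda hxy).
set y := xy *m V *m Dm U w a^-1 in heq hyd *.
have hDab : forall X : 'rV[R]_d, sqn (X *m Dm U w a^-1 *m Dm U w b) <= sqn X.
  move=> X; rewrite -mulmxA DmM //.
  have s1 : 1 <= a^-1 * b by rewrite ler_pdivlMl // mulr1 (le_trans ad db).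
  by have /andP[_ ->] := sqn_Dm X hU hw s1.
have hyb : sqn (y *m Dm U w b) <= ((2 * eps)^-1) ^+ 2.
  apply: le_trans hyd.
  have s1 : 1 <= delta^-1 * b by rewrite ler_pdivlMl // mulr1.
  have /andP[_ h] := sqn_Dm (y *m Dm U w delta) hU hw s1.
  by rewrite -mulmxA DmM // mulrA mulfV ?lt0r_neq0 // mul1r in h.
have [rho0|rhon] := eqVneq (sqn wx) 0.
  have wx0 := sqn_eq0 rho0.
  rewrite wx0 !mul0mx add0r in heq.
  have hxt : xy = t.
    apply: (cancelV hV).
    have := congr1 (fun X => X *m Dm U w a) heq.
    by rewrite /= !Dm_cancel.
  apply: le_trans (_ : \sum_(i < d) (0 : R) <= 1); last by rewrite big1.
  apply: ler_sum => i _; case: (boolP (eps^-1 < sigma i)) => hb.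
    by rewrite hxt ht // mul0r expr0n.
  by rewrite hxy // mul0r expr0n.
have rho : 0 < sqn wx by rewrite lt_neqAle eq_sym rhon sqn_ge0.
set lam := (eps * Num.sqrt (sqn wx))^-1.
have sq0 : 0 < Num.sqrt (sqn wx) by rewrite sqrtr_gt0.
have lam0 : 0 < lam by rewrite invr_gt0 mulr_gt0.
have lam2 : lam ^+ 2 * sqn wx = (eps ^+ 2)^-1.
  by rewrite /lam exprVn exprMn sqr_sqrtr ?sqn_ge0 // invfM divfK // lt0r_neq0.
have Ez : E ((lam *: wx) *m V' *m Dm U w b^-1).
  apply: (in_E hU b0 e0 hdb).
    by move=> i hb; rewrite mxE hwx // mulr0.
  apply: le_trans (@big_bound _ _ sigma' eps (lam *: wx) e0 _) _.
    by move=> i hb; rewrite mxE hwx // mulr0.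
  rewrite sqn_scale lam2 mulfV //.
  by rewrite expf_neq0 // lt0r_neq0.
have [c [hc hcz]] := coord_out hda Ez.
have hz : (lam *: wx) *m V' *m Dm U w b^-1 *m Dm U w a = (lam *: (xy - t)) *m V.
  rewrite -!scalemxAl; congr (_ *: _).
  have -> : wx *m V' *m Dm U w b^-1 = y - t *m V *m Dm U w a^-1 by rewrite heq addrK.
  by rewrite mulmxBl /y !Dm_cancel // mulmxBl.
have hcr : \row_i (c 0 i * sigma i) = lam *: (xy - t).
  by apply: (cancelV hV); rewrite -hcz hz.
have hent : forall i, c 0 i * sigma i = lam * (xy 0 i - t 0 i).
  by move=> i; have := rowE i hcr; rewrite !mxE.
have lamn : lam != 0 by rewrite lt0r_neq0.
have hst : sqn t <= lam^-1 ^+ 2 * eps ^+ 2.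
  have hsb : \sum_i (if eps^-1 < sigma i then 0 else c 0 i * sigma i) ^+ 2 <= eps ^+ 2.
    by case: hda => ha [_ [_ hg]]; apply: small_bound.
  apply: le_trans (_ : lam^-1 ^+ 2 * \sum_i (if eps^-1 < sigma i then 0 else c 0 i * sigma i) ^+ 2 <= _); last first.
    by rewrite ler_wpM2l ?sqr_ge0.
  rewrite /sqn mulr_sumr; apply: ler_sum => i _; case: ifP => hb.
    by rewrite ht // expr0n mulr0.
  rewrite hent (hxy i (negbT hb)) sub0r mulrN sqrrN exprMn mulrA -exprMn mulVf // expr1n mul1r //.
have hsx : \sum_i (xy 0 i / sigma i) ^+ 2 <= lam^-1 ^+ 2.
  apply: le_trans (_ : lam^-1 ^+ 2 * sqn c <= _); last by rewrite ler_piMr ?sqr_ge0.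
  rewrite /sqn mulr_sumr; apply: ler_sum => i _.
  case: (boolP (eps^-1 < sigma i)) => hb; last by rewrite hxy // mul0r expr0n mulr_ge0 ?sqr_ge0.
  have s0 : sigma i != 0.
    by apply: lt0r_neq0; apply: lt_trans hb; rewrite invr_gt0.
  have -> : xy 0 i = lam^-1 * (c 0 i * sigma i) by rewrite hent ht // subr0 mulrA mulVf // mul1r.
  by rewrite mulrA mulfK // exprMn.
have hr : sqn wx <= 2 * ((2 * eps)^-1) ^+ 2 + 2 * (lam^-1 ^+ 2 * eps ^+ 2).
  have -> : sqn wx = sqn (y *m Dm U w b - t *m V *m Dm U w a^-1 *m Dm U w b).
    by rewrite -mulmxBl heq addrK Dm_cancel // sqn_orth.
  apply: le_trans (sqn_sub2 _ _) _; apply: lerD; rewrite ler_pM2l ?ltr0n //.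
  by apply: le_trans (hDab _) _; rewrite sqn_orth.
apply: le_trans hsx _.
have li : lam^-1 ^+ 2 = eps ^+ 2 * sqn wx.
  by rewrite /lam invrK exprMn sqr_sqrtr // sqn_ge0.
rewrite li in hr *.
have ee : ((2 * eps)^-1) ^+ 2 * eps ^+ 2 = 4^-1.
  rewrite exprVn exprMn invfM divfK ?expf_neq0 ?lt0r_neq0 //.
  by congr (_^-1); rewrite expr2 -natrM.
have e2 : 0 < eps ^+ 2 by rewrite exprn_gt0.
have e21 : eps ^+ 2 < 4^-1.
  have -> : (4 : R)^-1 = 2^-1 ^+ 2 by rewrite exprVn; congr (_^-1); rewrite expr2 -natrM.
  by rewrite ltr_pXn2r ?nnegrE ?invr_ge0 ?ler0n // ltW.
have h4 : 4^-1 * 4 = 1 :> R by rewrite mulVf // pnatr_eq0.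
set X := eps ^+ 2 * sqn wx.
have hX : X <= 2 * 4^-1 + 2 * eps ^+ 2 * eps ^+ 2 * X.
  have := ler_wpM2l (ltW e2) hr.
  rewrite /X; set A := ((2 * eps)^-1) ^+ 2 in ee *; set P := sqn wx.
  move=> h; apply: le_trans h _.
  rewrite mulrDr; apply: lerD; first by rewrite mulrCA [eps ^+ 2 * A]mulrC ee.
  nra.
have X0 : 0 <= X by rewrite mulr_ge0 ?sqn_ge0 // ltW.
set k := (4 : R)^-1 in h4 e21 hX; clearbody k.
set f := eps ^+ 2 in e2 e21 hX *.
have k0 : 0 <= k by apply: le_trans (ltW e2) (ltW e21).
have hff : f * f <= k * k by rewrite ler_pM // ltW.
have hffX : f * f * X <= k * k * X by rewrite ler_wpM2r.
have k16 : k * k * 16 = 1 by nra.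
have hkX : k * k * X * 16 = X by rewrite mulrAC k16 mul1r.
nra.
Qed.

Lemma cap_zero (R : realType) (d : nat) (A B : 'M[R]_d) :
  (forall z : 'rV[R]_d, (z <= A)%MS -> (z <= B)%MS -> z = 0) -> (A :&: B)%MS = 0.
Proof.
move=> h; apply/row_matrixP => i; rewrite row0; apply: h.
  by have := row_sub i (A :&: B)%MS; rewrite sub_capmx => /andP[].
by have := row_sub i (A :&: B)%MS; rewrite sub_capmx => /andP[].
Qed.

Unset Implicit Arguments.

Theorem lemma4p8 (R : realType) (d m : nat) (U : 'M[R]_d) (w : 'I_d -> nat)
  (hU : orthonormal_rows U) (hw : forall i, (0 < w i <= m)%N)
  (E : set 'rV[R]_d) (hE : is_ellipsoid E)
  (eps : R) (heps : 0 < eps < 2^-1)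
  (a b : R) (ha : 0 < a) (hab : a <= b)
  (hdeg : forall delta : R, a <= delta <= b -> eps_degenerate eps (dil U w delta @` E)) :
  exists H : 'M[R]_d,
    forall delta : R, a <= delta <= b ->
      (dil U w delta @` E `<=`
         msum (dil U w delta @` [set x | (x <= H)%MS]) (ballr eps)) /\
      (dil U w delta @` [set x | (x <= H)%MS] `&` ballr ((2 * eps)^-1)
         `<=` dil U w delta @` E).
Proof.
case/andP: heps => e0 e1.
rewrite /orthonormal_rows in hU.
have b0 : 0 < b by apply: lt_le_trans hab.
have hdeg' : forall delta, a <= delta <= b ->
    exists sigma V, ddata U w E eps delta sigma V := hdeg.
have [sigma [V hda]] := hdeg' a (ltac:(by rewrite lexx hab)).
have hV : V *m V^T = 1%:M by case: hda => _ [].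
exists (Sm U w eps a sigma V) => delta /andP[had hdb].
have d0 : 0 < delta by apply: lt_le_trans had.
split.
- move=> x [e Ee <-].
  have [c [hc he]] := coord_out hda Ee.
  have hxi0 : forall i, (\row_i (c 0 i * sigma i)) 0 i = c 0 i * sigma i by move=> i; rewrite mxE.
  move: (\row_i (c 0 i * sigma i)) hxi0 he => xi hxi he.
  exists (dil U w delta (xi *m Sm U w eps a sigma V)).
  exists (xi *m (1%:M - Bm eps sigma) *m V *m Dm U w (a^-1 * delta)).
  split; first by exists (xi *m Sm U w eps a sigma V) => //; exact: submxMl.
  split.
    apply: vnorm_le; first exact: ltW e0.
    have s1 : 1 <= a^-1 * delta by rewrite ler_pdivlMl // mulr1.
    have /andP[_ h1] := sqn_Dm (xi *m (1%:M - Bm eps sigma) *m V) hU hw s1.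
    apply: le_trans h1 _; rewrite sqn_orth //.
    have hsb : \sum_i (if eps^-1 < sigma i then 0 else c 0 i * sigma i) ^+ 2 <= eps ^+ 2.
      by case: hda => ha' [_ [_ hg]]; apply: small_bound.
    apply: le_trans hsb; rewrite le_eqVlt; apply/orP; left; apply/eqP.
    by apply: eq_bigr => i _; rewrite pT hxi.
  rewrite !dilE.
  have -> : e *m Dm U w delta = xi *m V *m Dm U w (a^-1 * delta).
    by rewrite -he -mulmxA DmM // mulrA mulfV ?lt0r_neq0 // mul1r.
  rewrite /Sm -!mulmxA DmM // !mulmxA -mulmxDl -mulmxDl mulmxBr mulmx1 addrC subrK //.
- move=> x [[y hy <-] hx].
  exists y => //.
  have [s' [V' hdbb]] := hdeg' b (ltac:(by rewrite hab lexx)).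
  have hV' : V' *m V'^T = 1%:M by case: hdbb => _ [].
  pose N := (Num.bound (m%:R * (b - a) * 2 / a)).+1.
  have N0 : 0 < (N%:R : R) by rewrite ltr0n.
  set h := (b - a) / N%:R.
  have h0 : 0 <= h by rewrite divr_ge0 ?subr_ge0 // ltW.
  have hNh : a + N%:R * h = b by rewrite /h mulrC divfK ?lt0r_neq0 // addrC subrK.
  have hmh : m%:R * h * 2 <= a.
    have hb0 : 0 <= m%:R * (b - a) * 2 / a by rewrite !mulr_ge0 ?ler0n ?subr_ge0 // invr_ge0 ltW.
    have := archi_boundP hb0; rewrite -/(Num.bound _) => hlt.
    have hle : (Num.bound (m%:R * (b - a) * 2 / a))%:R <= (N%:R : R) by rewrite ler_nat.
    have := lt_le_trans hlt hle; rewrite ltr_pdivrMr // => h1.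
    rewrite /h mulrAC mulrA ler_pdivrMr //; rewrite mulrC; apply: ltW.
    by rewrite (mulrC a) mulrA (mulrC _ (m%:R)).  
  have hex : forall n, (n <= N)%N -> exists sigma V, ddata U w E eps (a + n%:R * h) sigma V.
    move=> n hn; apply: hdeg'; apply/andP; split; first by rewrite lerDl mulr_ge0 ?ler0n.
    rewrite -hNh lerD2l ler_wpM2r // ler_nat //.
  have hdbN : ddata U w E eps (a + N%:R * h) s' V' by rewrite hNh.
  have hrank := chain hU hw ha h0 hmh e0 e1 hex hda (leqnn N) hdbN.
  rewrite hNh in hrank.
  have hk : forall x, 1 * sqn (x *m Dm U w b) <= sqn (x *m Dm U w a).
    move=> z; rewrite mul1r.
    have s1 : 1 <= a^-1 * b by rewrite ler_pdivlMl // mulr1.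
    have /andP[_ h1] := sqn_Dm (z *m Dm U w a) hU hw s1.
    by rewrite -mulmxA DmM // mulrA mulfV ?lt0r_neq0 // mul1r in h1.
  have hek : eps ^+ 4 < 1.
    have e1' : eps < 1 by apply: lt_trans e1 _; rewrite invf_lt1 ?ltr0n // ltr1n.
    by rewrite expr_lt1 // ltW.
  have hcap := cap_zero (cap0 hU b0 ha e0 hdbb hda hk hek).
  have hST := rank_ST w eps sigma hU hV ha.
  have hfull : (y <= Sm U w eps b s' V' + Tm U w eps a sigma V)%MS.
    apply: submx_full; rewrite /row_full eqn_leq rank_leq_col /=.
    have := mxrank_sum_cap (Sm U w eps b s' V') (Tm U w eps a sigma V).
    rewrite hcap mxrank0 addn0 => ->; lia.
  move/submxP: hy => [r hr].
  move/sub_addsmxP: hfull => [[p q] /= hpq].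
  have ey : y = r *m Bm eps sigma *m V *m Dm U w a^-1 by rewrite hr /Sm !mulmxA.
  rewrite ey.
  apply: (core (m:=m) (b:=b) (delta:=delta) (sigma':=s') (V':=V') (t:=q *m (1%:M - Bm eps sigma))
           (wx:=p *m Bm eps s') hU hw ha had hdb e0 e1 hda hdbb).
  + by move=> i hb; rewrite pB (negbTE hb).
  + by move=> i hb; rewrite pT hb.
  + by move=> i hb; rewrite pB (negbTE hb).
  + by rewrite -ey hpq /Sm /Tm !mulmxA.
  + rewrite -ey -dilE; apply: vnorm_sqn; exact: hx.
Qed.
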